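(* Let $n\ge 1$ and consider the $n$-qubit bit flip (repetition) code, with encoded states $\overline{|0\rangle}=|0\rangle^{\otimes n}$ and $\overline{|1\rangle}=|1\rangle^{\otimes n}$. Suppose each of the $n$ physical qubits independently suffers the Pauli error $\sigma\in\{I,X,Y,Z\}$ with probability $p_\sigma$, where $p_I+p_X+p_Y+p_Z=1$. Put $q_X=p_X+p_Y$ and, for $0\le k\le n$, $$a_k=\binom{n}{k}q_X^k(1-q_X)^{n-k},\qquad b_k=\binom{n}{k}(p_X-p_Y)^k(p_I-p_Z)^{n-k}.$$ For $0\le k<\frac n2$, the probability $l_\sigma(k)$ of measuring a syndrome corresponding to an error of distance $k$ and having resulting logical error $\sigma$ is $$l_I(k)=\frac{a_k+b_k}{2},\quad l_X(k)=\frac{a_{n-k}+b_{n-k}}{2},\quad l_Y(k)=\frac{a_{n-k}-b_{n-k}}{2},\quad l_Z(k)=\frac{a_k-b_k}{2}.$$ If $n$ is even, then for $k=\frac n2$, $$l_I(\tfrac n2)=l_X(\tfrac n2)=\frac{a_{n/2}+b_{n/2}}{4},\qquad l_Y(\tfrac n2)=l_Z(\tfrac n2)=\frac{a_{n/2}-b_{n/2}}{4}.$$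
   Context: An $n$-qubit Pauli error $E$ (tensor product of single-qubit Paulis, up to phase) has a bit-flip pattern $s\in\{0,1\}^n$, where $s_i=1$ iff the $i$-th factor is $X$ or $Y$. Syndrome measurement of the bit flip code (stabilizers $Z_iZ_{i+1}$) reveals $s$ up to complementation, i.e. the unordered pair $\{s,\bar s\}$. Such a syndrome is said to correspond to an error of distance $k=\min(|s|,n-|s|)$, where $|s|$ is the Hamming weight. Recovery applies $X$ on the qubits of the minimum-weight representative of $\{s,\bar s\}$ (when $|s|=n/2$, a fixed choice of one of the two representatives is made). After recovery the residual operator equals, up to phase and stabilizers, a logical operator $\overline{X}^{\alpha}\overline{Z}^{\beta}$, where $\alpha=1$ iff the applied representative differs from $s$ (i.e. a logical bit flip occurred) and $\beta=1$ iff the total number of phase-type components of the residual is odd (a logical phase flip). The logical error $\sigma$ is $I,X,Z,Y$ for $(\alpha,\beta)=(0,0),(1,0),(0,1),(1,1)$ respectively. *)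

(* Defs.v *)
From mathcomp Require Import all_boot all_order all_algebra.
Set Implicit Arguments. Unset Strict Implicit. Unset Printing Implicit Defensive.
Import Order.TTheory GRing.Theory Num.Theory.

(* Single-qubit Paulis up to phase, in symplectic form (x-part, z-part):
   I = (false,false), X = (true,false), Y = (true,true), Z = (false,true). *)
Definition Pauli := (bool * bool)%type.
Definition PI : Pauli := (false, false).
Definition PX : Pauli := (true, false).
Definition PY : Pauli := (true, true).
Definition PZ : Pauli := (false, true).

(* Logical errors X^alpha Z^beta are encoded as (alpha, beta), so the
   logical error sigma in {I,X,Y,Z} uses the same encoding as above. *)

Section Code.
Variable n : nat.

Definition error := {ffun 'I_n -> Pauli}.

Definition flips (E : error) : {set 'I_n} := [set i | (E i).1].

Definition dist (E : error) : nat := minn #|flips E| (n - #|flips E|).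

(* Recovery: the minimum-weight representative of {s, ~s};
   when |s| = n/2 the fixed choice [tie s] is used. *)
Definition recovery (tie : {set 'I_n} -> {set 'I_n}) (s : {set 'I_n}) :
  {set 'I_n} :=
  if (#|s|).*2 < n then s
  else if n < (#|s|).*2 then ~: s
  else tie s.

(* a valid tie-breaking rule: picks one of the two representatives,
   depending only on the syndrome (the unordered pair {s, ~s}) *)
Definition valid_tie (tie : {set 'I_n} -> {set 'I_n}) : Prop :=
  forall s : {set 'I_n}, (#|s|).*2 = n ->
    (tie s = s \/ tie s = ~: s) /\ tie (~: s) = tie s.

(* residual operator E * X^{r} (up to phase) *)
Definition residual (tie : {set 'I_n} -> {set 'I_n}) (E : error) : error :=
  [ffun i => (((E i).1 (+) (i \in recovery tie (flips E))), (E i).2)].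

Definition logical (tie : {set 'I_n} -> {set 'I_n}) (E : error) : Pauli :=
  (recovery tie (flips E) != flips E,
   odd #|[set i | (residual tie E i).2]|).

Variable R : realFieldType.

Definition err_prob (p : Pauli -> R) (E : error) : R := \prod_i p (E i).

Definition lprob (tie : {set 'I_n} -> {set 'I_n}) (p : Pauli -> R)
  (sigma : Pauli) (k : nat) : R :=
  \sum_(E : error | (dist E == k) && (logical tie E == sigma)) err_prob p E.

Local Open Scope ring_scope.

Definition qX (p : Pauli -> R) : R := p PX + p PY.

Definition acoef (p : Pauli -> R) (k : nat) : R :=
  'C(n, k)%:R * qX p ^+ k * (1 - qX p) ^+ (n - k).

Definition bcoef (p : Pauli -> R) (k : nat) : R :=
  'C(n, k)%:R * (p PX - p PY) ^+ k * (p PI - p PZ) ^+ (n - k).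

End Code.

(* Main.v *)
Require Import Defs.
From mathcomp Require Import all_boot all_order all_algebra.
From mathcomp Require Import ring lra zify.
Import Order.TTheory GRing.Theory Num.Theory.
Set Implicit Arguments. Unset Strict Implicit.
Local Open Scope ring_scope.

Lemma sum_flips (n : nat) (R : comNzRingType) (u : 'I_n -> Pauli -> R) (S : {set 'I_n}) :
 \sum_(E : error n | flips E == S) \prod_i u i (E i) =
 \prod_i \sum_(P : Pauli | P.1 == (i \in S)) u i P.
Proof.
rewrite (eq_bigr (fun i => \sum_(P : Pauli) (if P.1 == (i \in S) then u i P else 0)));
  last by move=> i _; rewrite big_mkcond.
rewrite bigA_distr_bigA /= [LHS]big_mkcond /=. apply: eq_bigr => E _.
case: eqP => [<-|neq].
  by apply: eq_bigr => i _; rewrite inE eqxx.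
case: (pickP (fun i => (E i).1 != (i \in S))) => [i Hi|H].
  by rewrite (bigD1 i) //= (negbTE Hi) mul0r.
exfalso; apply: neq; apply/setP => j; rewrite inE; move: (H j) => /= /negbFE/eqP.
by [].
Qed.

Lemma sum_pauli (R : comNzRingType) (u : Pauli -> R) b :
  \sum_(P : Pauli | P.1 == b) u P = u (b, false) + u (b, true).
Proof.
rewrite big_mkcond (eq_bigr (fun P : Pauli => if P.1 == b then u (P.1, P.2) else 0));
  last by case.
rewrite -(pair_bigA _ (fun x y => if x == b then u (x, y) else 0)) /=.
rewrite big_bool /= !big_bool /=; case: b => /=; rewrite ?eqxx /=; ring.
Qed.

Lemma prod_ifS n (R : comNzRingType) (S : {set 'I_n}) (x y : R) :
  \prod_(i < n) (if i \in S then x else y) = x ^+ #|S| * y ^+ (n - #|S|).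
Proof.
rewrite (bigID (mem S)) /=.
rewrite (eq_bigr (fun=> x)); last by move=> i ->.
rewrite [X in _ * X](eq_bigr (fun=> y)); last by move=> i /negbTE ->.
rewrite !prodr_const. congr (_ * _ ^+ _).
have H := cardC (mem S); rewrite card_ord in H.
by rewrite -[X in (X - _)%N]H addKn; apply: eq_card => i.
Qed.

Lemma prod_sign n (R : comNzRingType) (b : 'I_n -> bool) :
  \prod_i (-1) ^+ b i = (-1) ^+ #|[set i | b i]| :> R.
Proof.
have := @prod_ifS n R [set i | b i] (-1 : R) 1; rewrite expr1n mulr1 => <-.
by apply: eq_bigr => i _; rewrite inE; case: (b i).
Qed.

Definition zs n (E : error n) : {set 'I_n} := [set i | (E i).2].

Section Sums.
Variables (n : nat) (R : realFieldType) (p : Pauli -> R).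
Hypothesis hp1 : p PI + p PX + p PY + p PZ = 1.

Definition Aterm (h : nat) := qX p ^+ h * (1 - qX p) ^+ (n - h).
Definition Bterm (h : nat) := (p PX - p PY) ^+ h * (p PI - p PZ) ^+ (n - h).

Lemma sumA (S : {set 'I_n}) :
  \sum_(E : error n | flips E == S) err_prob p E = Aterm #|S|.
Proof.
rewrite /err_prob (@sum_flips n R (fun _ => p)) /Aterm -prod_ifS; apply: eq_bigr => i _.
move: hp1; rewrite sum_pauli /qX /PI /PX /PY /PZ; case: (i \in S) => /= H; lra.
Qed.

Lemma sumB (S : {set 'I_n}) :
  \sum_(E : error n | flips E == S) err_prob p E * (-1) ^+ #|zs E| = Bterm #|S|.
Proof.
rewrite (eq_bigr (fun E : error n => \prod_i (p (E i) * (-1) ^+ (E i).2))); last first.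
  by move=> E _; rewrite big_split /= prod_sign.
rewrite (@sum_flips n R (fun _ P => p P * (-1) ^+ P.2)) /Bterm -prod_ifS; apply: eq_bigr => i _.
rewrite sum_pauli /PI /PX /PY /PZ; case: (i \in S) => /=; rewrite ?expr0 ?expr1; ring.
Qed.

Lemma sum_inner (S : {set 'I_n}) (b : bool) :
  \sum_(E : error n | (flips E == S) && (odd #|zs E| == b)) err_prob p E
  = (Aterm #|S| + (-1) ^+ b * Bterm #|S|) / 2.
Proof.
rewrite big_mkcondr /= -sumA -sumB.
rewrite (eq_bigr (fun E : error n => (err_prob p E + (-1) ^+ b * (err_prob p E * (-1) ^+ #|zs E|)) / 2)).
  by rewrite -mulr_suml big_split /= -mulr_sumr.
move=> E _; rewrite -[(-1) ^+ #|zs E|]signr_odd; case: b; case: (odd #|zs E|) => /=; rewrite ?expr0 ?expr1; by field; rewrite ?pnatr_eq0.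
Qed.
End Sums.

Lemma lprob_split n (R : realFieldType) (p : Pauli -> R)
  (hp1 : p PI + p PX + p PY + p PZ = 1) tie (sigma : Pauli) k :
  lprob tie p sigma k = \sum_(S : {set 'I_n})
    (if (minn #|S| (n - #|S|) == k) && ((recovery tie S != S) == sigma.1)
     then (Aterm n p #|S| + (-1) ^+ sigma.2 * Bterm n p #|S|) / 2 else 0).
Proof.
rewrite /lprob (partition_big (@flips n) xpredT) //=. apply: eq_bigr => S _.
case: sigma => s1 s2 /=.
case: ifP => Hc.
  rewrite -(sum_inner hp1). apply: eq_bigl => E.
  case: (eqVneq (flips E) S) => [HE|HE]; last by rewrite andbF andFb.
  rewrite andbT andTb /dist /logical HE xpair_eqE. move/andP: Hc => [-> ->] /=.
  suff -> : [set i | (residual tie E i).2] = zs E by [].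
  by apply/setP => i; rewrite !inE ffunE.
apply: big1 => E /andP[/andP[Hd Hl] /eqP HE].
by move: Hd Hl Hc; rewrite /dist /logical xpair_eqE -HE => -> /andP[-> _].
Qed.

Lemma sum_card n (R : realFieldType) (h : nat) (g : nat -> R) :
  \sum_(S : {set 'I_n}) (if #|S| == h then g #|S| else 0) = 'C(n, h)%:R * g h.
Proof.
rewrite -big_mkcond /= (eq_bigr (fun=> g h)); last by move=> S /eqP ->.
rewrite sumr_const mulr_natl; congr (_ *+ _).
by rewrite -[in RHS](card_ord n) -card_draws; apply: eq_card => S; rewrite inE.
Qed.

Lemma compl_neq n (hn : (1 <= n)%N) (S : {set 'I_n}) : (~: S != S).
Proof.
apply/eqP => H; move/setP: H => /(_ (Ordinal hn)); rewrite inE; by case: (_ \in S).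
Qed.

Lemma cond1 n (hn : (1 <= n)%N) tie (A : {set 'I_n}) k (hk : (k.*2 < n)%N) (b : bool) :
  (minn #|A| (n - #|A|) == k) && ((recovery tie A != A) == b) =
  (#|A| == if b then n - k else k)%N.
Proof.
have Hle : (#|A| <= n)%N by rewrite -[X in (_ <= X)%N](card_ord n) max_card.
have HC := compl_neq hn A.
have F1 : (false == true) = false by [].
have F2 : (true == false) = false by [].
have [c Hc] : {c | #|A| = c} by exists #|A|.
rewrite /recovery -!muln2 !Hc; rewrite -muln2 in hk; rewrite Hc in Hle.
case: ifP => H1; [|case: ifP => H2]; case: b;
  rewrite /= ?eqxx ?HC ?F1 ?F2 ?andbT ?andbF.
all: try move/negbT: H1; try move/negbT: H2; rewrite -?leqNgt => *.
5,6: rewrite (_ : (minn c (n - c) == k) = false) /=; [|apply/negbTE/eqP; try lia].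
all: repeat (case: eqP; intro); (by []) || (exfalso; lia).
Qed.

Lemma final_eq n (R : realFieldType) (p : Pauli -> R) h (b : bool) :
  'C(n, h)%:R * ((Aterm n p h + (-1) ^+ b * Bterm n p h) / 2) =
  (acoef n p h + (-1) ^+ b * bcoef n p h) / 2.
Proof. rewrite /Aterm /Bterm /acoef /bcoef; ring. Qed.

Lemma cond2 n tie (A : {set 'I_n}) h (hh : h.*2 = n) (b : bool) :
  (minn #|A| (n - #|A|) == h) && ((recovery tie A != A) == b) =
  (#|A| == h) && ((tie A != A) == b).
Proof.
have Hle : (#|A| <= n)%N by rewrite -[X in (_ <= X)%N](card_ord n) max_card.
have [c Hc] : {c | #|A| = c} by exists #|A|.
rewrite /recovery !Hc; rewrite Hc in Hle.
case: (eqVneq c h) => E.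
  rewrite E hh ltnn /= (_ : (minn h (n - h) == h) = true) //; apply/eqP; lia.
rewrite andFb (_ : (minn c (n - c) == h) = false) //; apply/negbTE/eqP; lia.
Qed.

Lemma count_tie n (hn : (1 <= n)%N) (R : realFieldType) tie (htie : valid_tie tie) h (hh : h.*2 = n) (b : bool) :
  \sum_(A : {set 'I_n}) (if (#|A| == h) && ((tie A != A) == b) then 1 else 0 : R)
  = 'C(n, h)%:R / 2.
Proof.
set X := fun b => \sum_(A : {set 'I_n}) (if (#|A| == h) && ((tie A != A) == b) then 1 else 0 : R).
have HX : X true = X false.
  rewrite /X [RHS](reindex_inj (@setC_inj _)) /=; apply: eq_bigr => A _.
  have Hle : (#|A| <= n)%N by rewrite -[X in (_ <= X)%N](card_ord n) max_card.
  have HcC : #|~: A| = (n - #|A|)%N by have := cardsC A; rewrite card_ord; lia.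
  rewrite HcC.
  case: (eqVneq #|A| h) => E.
    have [Ht1 Ht2] := htie A (etrans (congr1 double E) hh).
    rewrite E (_ : ((n - h)%N == h) = true) /=; last by apply/eqP; lia.
    have HC := compl_neq hn A. rewrite eq_sym in HC.
    by rewrite Ht2; case: Ht1 => ->; rewrite ?eqxx ?HC ?(compl_neq hn A).
  rewrite (_ : ((n - #|A|)%N == h) = false) //; apply/negbTE/eqP; lia.
have Hsum : X true + X false = 'C(n, h)%:R.
  transitivity (\sum_(A : {set 'I_n}) (if #|A| == h then 1 else 0 : R)); last first.
    by rewrite (@sum_card n R h (fun=> (1 : R))) mulr1.
  rewrite /X -big_split /=; apply: eq_bigr => A _.
  by case: (#|A| == h); case: (tie A != A); rewrite /= ?addr0 ?add0r.
change (X b = 'C(n, h)%:R / 2).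
move: Hsum HX; case: b => Hs HX; lra.
Qed.

Theorem lemma1 (R : realFieldType) (n : nat) (hn : (1 <= n)%N)
  (p : Pauli -> R) (hp0 : forall s, 0 <= p s)
  (hp1 : p PI + p PX + p PY + p PZ = 1)
  (tie : {set 'I_n} -> {set 'I_n}) (htie : valid_tie tie) :
  (forall k : nat, (k.*2 < n)%N ->
     [/\ lprob tie p PI k = (acoef n p k + bcoef n p k) / 2,
         lprob tie p PX k = (acoef n p (n - k) + bcoef n p (n - k)) / 2,
         lprob tie p PY k = (acoef n p (n - k) - bcoef n p (n - k)) / 2 &
         lprob tie p PZ k = (acoef n p k - bcoef n p k) / 2]) /\
  (~~ odd n ->
     [/\ lprob tie p PI n./2 = (acoef n p n./2 + bcoef n p n./2) / 4,
         lprob tie p PX n./2 = (acoef n p n./2 + bcoef n p n./2) / 4,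
         lprob tie p PY n./2 = (acoef n p n./2 - bcoef n p n./2) / 4 &
         lprob tie p PZ n./2 = (acoef n p n./2 - bcoef n p n./2) / 4]).
Proof.
split.
  move=> k hk.
  have key : forall s1 s2 : bool, lprob tie p (s1, s2) k =
    (acoef n p (if s1 then (n - k)%N else k) + (-1) ^+ s2 * bcoef n p (if s1 then (n - k)%N else k)) / 2.
    move=> s1 s2; rewrite (lprob_split hp1) /=.
    rewrite (eq_bigr (fun A : {set 'I_n} => if #|A| == (if s1 then (n - k)%N else k)%N
       then (Aterm n p #|A| + (-1) ^+ s2 * Bterm n p #|A|) / 2 else 0)); last first.
      by move=> A _; rewrite cond1.
    by rewrite (@sum_card n R _ (fun c => (Aterm n p c + (-1) ^+ s2 * Bterm n p c) / 2)) final_eq.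
  by rewrite !key /= ?expr0 ?expr1 ?mul1r ?mulN1r.
move=> hev; set h := n./2.
have hh : h.*2 = n by move: (odd_double_half n); rewrite (negbTE hev).
have key : forall s1 s2 : bool, lprob tie p (s1, s2) h =
    (acoef n p h + (-1) ^+ s2 * bcoef n p h) / 4.
  move=> s1 s2; rewrite (lprob_split hp1) /=.
  rewrite (eq_bigr (fun A : {set 'I_n} =>
     (if (#|A| == h) && ((tie A != A) == s1) then 1 else 0) *
     ((Aterm n p h + (-1) ^+ s2 * Bterm n p h) / 2))); last first.
    move=> A _; rewrite cond2 //.
    by case: ifP => [/andP[/eqP -> _]|]; rewrite ?mul1r ?mul0r.
  rewrite -mulr_suml count_tie // /Aterm /Bterm /acoef /bcoef.
  by field; rewrite ?pnatr_eq0.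
by rewrite !key /= ?expr0 ?expr1 ?mul1r ?mulN1r.
Qed.
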